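(* Assume in addition that $\gcd(l,m)=1$ (so $k=lm$ and $\gcd(n,k)=1$). Then the unique numbers $u_r,v_r$ ($0\le r<k$) of the construction (i.e. those for which each $\mathcal A_r^t$ has slope $\alpha_{r+1}$ and each $\mathcal B_r^t$ has slope $-\beta_{r+1}$) are given by $$u_r=\frac{1}{\tau^n-1}\sum_{j=0}^{k-1}\Big(\alpha_{r+1+jn}\big(\psi_r^{jn+l}-\psi_r^{jn}\big)-\beta_{r+1+l+jn}\big(\psi_r^{(j+1)n}-\psi_r^{jn+l}\big)\Big),$$ $$v_r=\frac{1}{\tau^n-1}\sum_{j=0}^{k-1}\Big(\alpha_{r+1+m+jn}\big(\psi_r^{(j+1)n}-\psi_r^{jn+m}\big)-\beta_{r+1+jn}\big(\psi_r^{jn+m}-\psi_r^{jn}\big)\Big).$$ Equivalently, with $\chi_r=\psi_r^n$, $U_r=\alpha_{r+1}(\psi_r^l-1)-\beta_{r+l+1}(\psi_r^n-\psi_r^l)$ and $V_r=-\beta_{r+1}(\psi_r^m-1)+\alpha_{r+m+1}(\psi_r^n-\psi_r^m)$, they satisfy $u_r-\chi_ru_{r+n}=-U_r$, $v_r-\chi_rv_{r+n}=-V_r$, and $(\tau^n-1)u_r=\sum_{j=0}^{k-1}\psi_r^{jn}U_{r+jn}$, $(\tau^n-1)v_r=\sum_{j=0}^{k-1}\psi_r^{jn}V_{r+jn}$.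
   Context: Setting: $l,m$ positive integers, $n=l+m$, $k=\operatorname{lcm}(l,m)$, weights $\alpha_1,\dots,\alpha_l,\beta_1,\dots,\beta_m\ge0$ not all zero with $\sum\alpha_i=\sum\beta_j$, and $\rho_1,\dots,\rho_k>1$. Indexing conventions: for an integer $r$, $\alpha_r:=\alpha_i$ with $1\le i\le l$, $r\equiv i\pmod l$; $\beta_r:=\beta_j$ with $1\le j\le m$, $r\equiv j\pmod m$; $\rho_r:=\rho_h$ with $1\le h\le k$, $r\equiv h\pmod k$; $u_r,v_r$ are extended $k$-periodically in $r$. Set $\sigma_0=1$, $\sigma_r=\rho_1\cdots\rho_r$ ($1\le r\le k$), $\tau=\rho_1\cdots\rho_k$, and $\sigma_{sk+h}=\tau^s\sigma_h$ for $s\in\mathbb Z$, $0\le h<k$. For integers $r$ and $s\ge0$ let $\psi_r^s=\rho_{r+1}\rho_{r+2}\cdots\rho_{r+s}$ (with $\psi_r^0=1$). Points: ${\bf a}_r^t=\tau^t\sigma_r(1,u_r)$, ${\bf b}_r^t=\tau^t\sigma_r(1,v_r)$ for $r,t\in\mathbb Z$; segments $\mathcal A_r^t=[{\bf a}_r^t,{\bf b}_{r+l}^t]$, $\mathcal B_r^t=[{\bf b}_r^t,{\bf a}_{r+m}^t]$ for $0\le r<k$, $t\in\mathbb Z$. *)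

(* Defs.v *)
From HB Require Import structures.
From mathcomp Require Import all_boot all_order all_algebra.
Set Implicit Arguments. Unset Strict Implicit. Unset Printing Implicit Defensive.
Import Order.TTheory GRing.Theory Num.Theory.
Local Open Scope ring_scope.

(* Conventions: finite families alpha_1..alpha_l, beta_1..beta_m, rho_1..rho_k
   are given as functions nat -> R; only the values at indices 1..l (resp.
   1..m, 1..k) matter.  Integer indices are reduced periodically. *)

(* the unique i with 1 <= i <= p and r = i (mod p) (for p > 0) *)
Definition per_idx (p : nat) (r : int) : nat := (absz ((r - 1) %% p)%Z).+1.

Definition pext {R : Type} (p : nat) (x : nat -> R) (r : int) : R :=
  x (per_idx p r).

Definition tau {R : pzRingType} (k : nat) (rho : nat -> R) : R :=
  \prod_(1 <= h < k.+1) rho h.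

Definition sigma {R : unitRingType} (k : nat) (rho : nat -> R) (r : int) : R :=
  (tau k rho) ^ (r %/ k)%Z * \prod_(1 <= h < (absz (r %% k)%Z).+1) rho h.

Definition psi {R : pzRingType} (k : nat) (rho : nat -> R) (r : int) (s : nat) : R :=
  \prod_(i < s) pext k rho (r + (i.+1)%:Z).

(* points a_r^t = tau^t sigma_r (1, u_r), b_r^t = tau^t sigma_r (1, v_r) *)
Definition pt {R : unitRingType} (k : nat) (rho : nat -> R) (w : int -> R)
  (r t : int) : R * R :=
  ((tau k rho) ^ t * sigma k rho r, (tau k rho) ^ t * sigma k rho r * w r).

Definition slope {R : fieldType} (P Q : R * R) : R := (Q.2 - P.2) / (Q.1 - P.1).

(* Main.v *)
Require Import Defs.
From HB Require Import structures.
From mathcomp Require Import all_boot all_order all_algebra.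
From mathcomp Require Import zify ring lra.
Import Order.TTheory GRing.Theory Num.Theory.
Local Open Scope ring_scope.

Lemma sigmaS (R : fieldType) (k : nat) (rho : nat -> R) (r : int) :
  (0 < k)%N -> tau k rho != 0 ->
  sigma k rho (r + 1) = sigma k rho r * pext k rho (r + 1).
Proof.
move=> k0 t0.
have kz : (k%:Z != 0) by lia.
rewrite /sigma /pext /per_idx addrK.
set q := (r %/ k)%Z. set a := (r %% k)%Z.
have a0 : 0 <= a by apply: modz_ge0.
have ak : a < k%:Z by apply: ltz_pmod; rewrite ltz_nat.
have er : r = q * k%:Z + a by rewrite /q /a -divz_eq.
case: (ltP (a + 1) k%:Z) => ha.
- have -> : ((r + 1) %/ k)%Z = q.
    rewrite er -addrA divzMDl // divz_small ?addr0 //.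
    by apply/andP; split; [lia| rewrite /absz; lia].
  have -> : ((r + 1) %% k)%Z = a + 1.
    rewrite er -addrA modzMDl modz_small //; lia.
  have -> : absz (a + 1) = (absz a).+1 by lia.
  rewrite -mulrA; congr (_ * _).
  by rewrite big_nat_recr //=.
- have ea : a = k%:Z - 1 by lia.
  have -> : ((r + 1) %/ k)%Z = q + 1.
    rewrite er -addrA ea subrK -{2}(mul1r k%:Z) -mulrDl mulzK //.
  have -> : ((r + 1) %% k)%Z = 0.
    rewrite er -addrA ea subrK -{2}(mul1r k%:Z) -mulrDl modzMl //.
  rewrite expfzDr // expr1z big_geq // mulr1 -mulrA; congr (_ * _).
  have -> : absz a = k.-1 by lia.
  rewrite /tau (big_nat_recr k) /=; last by lia.
  by rewrite prednK.
Qed.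

Lemma psiD (R : pzRingType) k (rho : nat -> R) r a b :
  psi k rho r (a + b) = psi k rho r a * psi k rho (r + a%:Z) b.
Proof.
rewrite /psi big_split_ord /=; congr (_ * _); apply: eq_bigr => i _ /=.
by congr pext; lia.
Qed.

Lemma pextP (T : Type) p (x : nat -> T) r c :
  pext p x (r + (c * p)%N%:Z) = pext p x r.
Proof.
rewrite /pext /per_idx.
have -> : r + (c * p)%N%:Z - 1 = c%:Z * p%:Z + (r - 1) by rewrite PoszM; ring.
by rewrite modzMDl.
Qed.

Lemma psiP (R : pzRingType) k (rho : nat -> R) r s c :
  psi k rho (r + (c * k)%N%:Z) s = psi k rho r s.
Proof.
rewrite /psi; apply: eq_bigr => i _.
by rewrite -addrA (addrC _ (Posz i.+1)) addrA pextP.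
Qed.

Lemma sigma_shift (R : fieldType) (k : nat) (rho : nat -> R) (r : int) s :
  (0 < k)%N -> tau k rho != 0 ->
  sigma k rho (r + s%:Z) = sigma k rho r * psi k rho r s.
Proof.
move=> k0 t0; elim: s => [|s IH]; first by rewrite addr0 /psi big_ord0 mulr1.
have -> : r + s.+1%:Z = (r + s%:Z) + 1 by lia.
rewrite -addn1 psiD sigmaS // IH -mulrA; congr (_ * _).
by rewrite /psi big_ord1.
Qed.

Lemma pext_gt1 (R : realFieldType) (k : nat) (rho : nat -> R) x :
  (0 < k)%N -> (forall h, (1 <= h <= k)%N -> 1 < rho h) -> 1 < pext k rho x.
Proof.
move=> k0 hr; apply: hr; rewrite /per_idx /=.
have : ((x - 1) %% k)%Z < k%:Z by apply: ltz_pmod; rewrite ltz_nat.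
have : 0 <= ((x - 1) %% k)%Z by apply: modz_ge0; lia.
lia.
Qed.



Lemma psi_gt1 (R : realFieldType) (k : nat) (rho : nat -> R) r s :
  (0 < k)%N -> (forall h, (1 <= h <= k)%N -> 1 < rho h) ->
  1 <= psi k rho r s /\ ((0 < s)%N -> 1 < psi k rho r s).
Proof.
move=> k0 hr; elim: s => [|s [IH1 IH2]]; first by rewrite /psi big_ord0.
have h := @pext_gt1 R k rho (r + s.+1%:Z) k0 hr.
have e : psi k rho r s.+1 = psi k rho r s * pext k rho (r + s.+1%:Z).
  by rewrite /psi big_ord_recr.
rewrite e; split; [|move=> _]; nra.
Qed.

Lemma tau_gt0 (R : realFieldType) (k : nat) (rho : nat -> R) :
  (forall h, (1 <= h <= k)%N -> 1 < rho h) -> 0 < tau k rho.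
Proof.
move=> hr; rewrite /tau big_nat; apply: prodr_gt0 => h /andP[h1 h2].
have := hr h (ltac:(lia)); lra.
Qed.

Lemma sigma_neq0 (R : realFieldType) (k : nat) (rho : nat -> R) r :
  (0 < k)%N -> (forall h, (1 <= h <= k)%N -> 1 < rho h) -> sigma k rho r != 0.
Proof.
move=> k0 hr; rewrite /sigma mulf_neq0 //.
  by apply: expfz_neq0; have := @tau_gt0 R k rho hr; lra.
have : 0 < \prod_(1 <= h < (absz (r %% k)%Z).+1) rho h.
  rewrite big_nat; apply: prodr_gt0 => h /andP[h1 h2].
  have : ((r) %% k)%Z < k%:Z by apply: ltz_pmod; rewrite ltz_nat.
  have : 0 <= ((r) %% k)%Z by apply: modz_ge0; lia.
  move=> ? ?; have := hr h (ltac:(lia)); lra.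
lra.
Qed.

Lemma psi_k (R : realFieldType) (k : nat) (rho : nat -> R) r :
  (0 < k)%N -> (forall h, (1 <= h <= k)%N -> 1 < rho h) -> psi k rho r k = tau k rho.
Proof.
move=> k0 hr.
have t0 : tau k rho != 0 by have := @tau_gt0 R k rho hr; lra.
have s0 := @sigma_neq0 R k rho r k0 hr.
have kz : (k%:Z != 0) by lia.
apply/(mulfI s0). rewrite -sigma_shift // mulrC.
have -> : r + k%:Z = 1 * k%:Z + r by ring.
rewrite /sigma divzMDl // modzMDl expfzDr // expr1z.
by rewrite mulrA.
Qed.

Lemma psiP1 (R : pzRingType) k (rho : nat -> R) r s :
  psi k rho (r + k%:Z) s = psi k rho r s.
Proof. by have := @psiP R k rho r s 1; rewrite mul1n. Qed.

Lemma psi_kn (R : realFieldType) (k : nat) (rho : nat -> R) r c :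
  (0 < k)%N -> (forall h, (1 <= h <= k)%N -> 1 < rho h) ->
  psi k rho r (k * c) = tau k rho ^+ c.
Proof.
move=> k0 hr; elim: c => [|c IH]; first by rewrite muln0 /psi big_ord0 expr0.
by rewrite mulnS psiD psiP1 IH psi_k // exprS.
Qed.

Theorem mainTheorem2 (R : realFieldType) (l m : nat)
  (alpha beta rho : nat -> R) (u v : int -> R) :
  (0 < l)%N -> (0 < m)%N -> coprime l m ->
  (forall i, (1 <= i <= l)%N -> 0 <= alpha i) ->
  (forall j, (1 <= j <= m)%N -> 0 <= beta j) ->
  ((exists2 i, (1 <= i <= l)%N & alpha i != 0) \/
   (exists2 j, (1 <= j <= m)%N & beta j != 0)) ->
  \sum_(1 <= i < l.+1) alpha i = \sum_(1 <= j < m.+1) beta j ->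
  (forall h, (1 <= h <= lcmn l m)%N -> 1 < rho h) ->
  (* u, v extended k-periodically *)
  (forall r : int, u (r + (lcmn l m)%:Z) = u r) ->
  (forall r : int, v (r + (lcmn l m)%:Z) = v r) ->
  (* the construction: A_r^t has slope alpha_{r+1}, B_r^t has slope -beta_{r+1} *)
  (forall (r t : int), 0 <= r < (lcmn l m)%:Z ->
     slope (pt (lcmn l m) rho u r t) (pt (lcmn l m) rho v (r + l%:Z) t)
       = pext l alpha (r + 1)) ->
  (forall (r t : int), 0 <= r < (lcmn l m)%:Z ->
     slope (pt (lcmn l m) rho v r t) (pt (lcmn l m) rho u (r + m%:Z) t)
       = - pext m beta (r + 1)) ->
  let k := lcmn l m in
  let n := (l + m)%N in
  let tn := tau k rho ^+ n in
  let ps := psi k rho in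
  let al := pext l alpha in
  let be := pext m beta in
  let U := fun r : int => al (r + 1) * (ps r l - 1)
                          - be (r + l%:Z + 1) * (ps r n - ps r l) in
  let V := fun r : int => - be (r + 1) * (ps r m - 1)
                          + al (r + m%:Z + 1) * (ps r n - ps r m) in
  forall r : int, 0 <= r < k%:Z ->
  (u r = (tn - 1)^-1 * \sum_(j < k)
          (al (r + 1 + (j * n)%N%:Z) * (ps r (j * n + l)%N - ps r (j * n)%N)
           - be (r + 1 + l%:Z + (j * n)%N%:Z) * (ps r (j.+1 * n)%N - ps r (j * n + l)%N))) /\
      (      v r = (tn - 1)^-1 * \sum_(j < k)
          (al (r + 1 + m%:Z + (j * n)%N%:Z) * (ps r (j.+1 * n)%N - ps r (j * n + m)%N)
           - be (r + 1 + (j * n)%N%:Z) * (ps r (j * n + m)%N - ps r (j * n)%N))) /\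
      u r - ps r n * u (r + n%:Z) = - U r /\
      v r - ps r n * v (r + n%:Z) = - V r /\
      (tn - 1) * u r = \sum_(j < k) ps r (j * n)%N * U (r + (j * n)%N%:Z) /\
      (tn - 1) * v r = \sum_(j < k) ps r (j * n)%N * V (r + (j * n)%N%:Z).
Proof.
move=> l0 m0 _ _ _ _ _ hr hu hv HA HB k n tn ps al be U V r hr0.
rewrite -/k in hr hu hv HA HB.
have k0 : (0 < k)%N by rewrite lcmn_gt0 l0.
have lk : (l %| k)%N by apply: dvdn_lcml.
have mk : (m %| k)%N by apply: dvdn_lcmr.
have t0 : tau k rho != 0 by have := @tau_gt0 R k rho hr; lra.
have alP x : pext l alpha (x + k%:Z) = pext l alpha x.
  by rewrite -(divnK lk) pextP.
have beP x : pext m beta (x + k%:Z) = pext m beta x.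
  by rewrite -(divnK mk) pextP.
have psgt1 x s : (0 < s)%N -> 1 < psi k rho x s.
  by move=> s0; case: (@psi_gt1 R k rho x s k0 hr) => _; apply.
have EA0 x : 0 <= x < k%:Z -> u x = psi k rho x l * v (x + l%:Z)
      - pext l alpha (x + 1) * (psi k rho x l - 1).
  move=> hx; have H := HA x 0 hx.
  rewrite /slope /pt /= expr0z !mul1r sigma_shift // in H.
  have s0 := @sigma_neq0 R k rho x k0 hr.
  have p1 := psgt1 x l l0.
  have d0 : sigma k rho x * psi k rho x l - sigma k rho x != 0.
    rewrite -{2}(mulr1 (sigma k rho x)) -mulrBr mulf_neq0 // subr_eq0 gt_eqF //.
  have {H} H := congr1 (fun z => z * (sigma k rho x * psi k rho x l - sigma k rho x)) H.
  rewrite /= mulfVK // in H.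
  apply: (mulfI s0).
  have -> : sigma k rho x * u x = sigma k rho x * psi k rho x l * v (x + l%:Z)
     - (sigma k rho x * psi k rho x l * v (x + l%:Z) - sigma k rho x * u x) by ring.
  rewrite H; ring.
have EB0 x : 0 <= x < k%:Z -> v x = psi k rho x m * u (x + m%:Z)
      + pext m beta (x + 1) * (psi k rho x m - 1).
  move=> hx; have H := HB x 0 hx.
  rewrite /slope /pt /= expr0z !mul1r sigma_shift // in H.
  have s0 := @sigma_neq0 R k rho x k0 hr.
  have p1 := psgt1 x m m0.
  have d0 : sigma k rho x * psi k rho x m - sigma k rho x != 0.
    rewrite -{2}(mulr1 (sigma k rho x)) -mulrBr mulf_neq0 // subr_eq0 gt_eqF //.
  have {H} H := congr1 (fun z => z * (sigma k rho x * psi k rho x m - sigma k rho x)) H.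
  rewrite /= mulfVK // in H.
  apply/(mulfI s0).
  have -> : sigma k rho x * v x = sigma k rho x * psi k rho x m * u (x + m%:Z)
     - (sigma k rho x * psi k rho x m * u (x + m%:Z) - sigma k rho x * v x) by ring.
  rewrite H; ring.
have EA x : 0 <= x -> u x = psi k rho x l * v (x + l%:Z)
      - pext l alpha (x + 1) * (psi k rho x l - 1).
  have step y : u y = psi k rho y l * v (y + l%:Z)
      - pext l alpha (y + 1) * (psi k rho y l - 1) ->
     u (y + k%:Z) = psi k rho (y + k%:Z) l * v (y + k%:Z + l%:Z)
      - pext l alpha (y + k%:Z + 1) * (psi k rho (y + k%:Z) l - 1).
    have -> : y + k%:Z + l%:Z = (y + l%:Z) + k%:Z by ring.
    have -> : y + k%:Z + 1 = (y + 1) + k%:Z by ring.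
    by rewrite hu psiP1 hv alP.
  case: x => [N|N] // _; rewrite (divn_eq N k); elim: (N %/ k)%N => [|q IH].
    rewrite mul0n add0n; apply: EA0; have := ltn_pmod N k0; rewrite /=; lia.
  have -> : Posz (q.+1 * k + N %% k)%N = Posz (q * k + N %% k)%N + k%:Z by lia.
  exact: step.
have EB x : 0 <= x -> v x = psi k rho x m * u (x + m%:Z)
      + pext m beta (x + 1) * (psi k rho x m - 1).
  have step y : v y = psi k rho y m * u (y + m%:Z)
      + pext m beta (y + 1) * (psi k rho y m - 1) ->
     v (y + k%:Z) = psi k rho (y + k%:Z) m * u (y + k%:Z + m%:Z)
      + pext m beta (y + k%:Z + 1) * (psi k rho (y + k%:Z) m - 1).
    have -> : y + k%:Z + m%:Z = (y + m%:Z) + k%:Z by ring.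
    have -> : y + k%:Z + 1 = (y + 1) + k%:Z by ring.
    by rewrite hv psiP1 hu beP.
  case: x => [N|N] // _; rewrite (divn_eq N k); elim: (N %/ k)%N => [|q IH].
    rewrite mul0n add0n; apply: EB0; have := ltn_pmod N k0; rewrite /=; lia.
  have -> : Posz (q.+1 * k + N %% k)%N = Posz (q * k + N %% k)%N + k%:Z by lia.
  exact: step.
rewrite /U /V /ps /al /be /tn /n.
set Uf := (fun r0 : int => pext l alpha (r0 + 1) * (psi k rho r0 l - 1)
   - pext m beta (r0 + l%:Z + 1) * (psi k rho r0 (l + m) - psi k rho r0 l)).
set Vf := (fun r0 : int => - pext m beta (r0 + 1) * (psi k rho r0 m - 1)
   + pext l alpha (r0 + m%:Z + 1) * (psi k rho r0 (l + m) - psi k rho r0 m)).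
have uP c x : u (x + (c * k)%N%:Z) = u x.
  elim: c => [|c IH]; first by rewrite mul0n addr0.
  by rewrite mulSn PoszD addrA addrAC hu IH.
have vP c x : v (x + (c * k)%N%:Z) = v x.
  elim: c => [|c IH]; first by rewrite mul0n addr0.
  by rewrite mulSn PoszD addrA addrAC hv IH.
have Ru x : 0 <= x -> u x = psi k rho x (l+m) * u (x + (l+m)%N%:Z) - Uf x.
  move=> hx; rewrite /Uf (EA x hx) (EB (x + l%:Z)); last by lia.
  have -> : x + l%:Z + m%:Z = x + (l+m)%N%:Z by rewrite PoszD addrA.
  rewrite psiD; ring.
have Rv x : 0 <= x -> v x = psi k rho x (l+m) * v (x + (l+m)%N%:Z) - Vf x.
  move=> hx; rewrite /Vf (EB x hx) (EA (x + m%:Z)); last by lia.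
  have -> : x + m%:Z + l%:Z = x + (l+m)%N%:Z by rewrite PoszD addrA addrAC.
  rewrite (addnC l m) psiD; ring.
have Itu K x : 0 <= x -> u x = psi k rho x (K*(l+m)) * u (x + (K*(l+m))%N%:Z)
   - \sum_(j < K) psi k rho x (j*(l+m)) * Uf (x + (j*(l+m))%N%:Z).
  move=> hx; elim: K => [|K IH].
    by rewrite big_ord0 mul0n addr0 /psi big_ord0 mul1r subr0.
  rewrite big_ord_recr /= {1}IH (Ru (x + (K*(l+m))%N%:Z)); last by lia.
have -> : x + (K*(l+m))%N%:Z + (l+m)%N%:Z = x + (K.+1*(l+m))%N%:Z
    by rewrite mulSnr (PoszD (K*(l+m))) addrA.
  rewrite [in psi k rho x (K.+1 * _)]mulSnr (psiD _ k rho x (K*(l+m)) (l+m)); ring.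
have Itv K x : 0 <= x -> v x = psi k rho x (K*(l+m)) * v (x + (K*(l+m))%N%:Z)
   - \sum_(j < K) psi k rho x (j*(l+m)) * Vf (x + (j*(l+m))%N%:Z).
  move=> hx; elim: K => [|K IH].
    by rewrite big_ord0 mul0n addr0 /psi big_ord0 mul1r subr0.
  rewrite big_ord_recr /= {1}IH (Rv (x + (K*(l+m))%N%:Z)); last by lia.
  have -> : x + (K*(l+m))%N%:Z + (l+m)%N%:Z = x + (K.+1*(l+m))%N%:Z
    by rewrite mulSnr (PoszD (K*(l+m))) addrA.
  rewrite [in psi k rho x (K.+1 * _)]mulSnr (psiD _ k rho x (K*(l+m)) (l+m)); ring.
have r0 : 0 <= r by case/andP: hr0.
have Su : (tau k rho ^+ (l + m) - 1) * u r =
    \sum_(j < k) psi k rho r (j*(l+m)) * Uf (r + (j*(l+m))%N%:Z).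
  have := Itu k r r0; rewrite psi_kn // mulnC uP => E.
  by rewrite mulrBl mul1r {2}E; ring.
have Sv : (tau k rho ^+ (l + m) - 1) * v r =
    \sum_(j < k) psi k rho r (j*(l+m)) * Vf (r + (j*(l+m))%N%:Z).
  have := Itv k r r0; rewrite psi_kn // mulnC vP => E.
  by rewrite mulrBl mul1r {2}E; ring.
have tn0 : tau k rho ^+ (l + m) - 1 != 0.
  rewrite -(psi_kn R k rho 0 (l+m) k0 hr) subr_eq0 gt_eqF // psgt1 //.
  by rewrite muln_gt0 k0 addn_gt0 l0.
split.
  rewrite -[u r](mulKf tn0) Su; congr (_ * _); apply: eq_bigr => j _.
  rewrite /Uf (psiD _ k rho r (j*(l+m)) l) mulSnr (psiD _ k rho r (j*(l+m)) (l+m)).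
  have -> : r + 1 + (j*(l+m))%N%:Z = r + (j * (l+m))%N%:Z + 1 by ring.
  have -> : r + 1 + l%:Z + (j*(l+m))%N%:Z = r + (j * (l+m))%N%:Z + l%:Z + 1 by ring.
  ring.
split.
  rewrite -[v r](mulKf tn0) Sv; congr (_ * _); apply: eq_bigr => j _.
  rewrite /Vf (psiD _ k rho r (j*(l+m)) m) mulSnr (psiD _ k rho r (j*(l+m)) (l+m)).
  have -> : r + 1 + (j*(l+m))%N%:Z = r + (j * (l+m))%N%:Z + 1 by ring.
  have -> : r + 1 + m%:Z + (j*(l+m))%N%:Z = r + (j * (l+m))%N%:Z + m%:Z + 1 by ring.
  ring.
split.
  by rewrite {1}(Ru r r0) /Uf; ring.
split.
  by rewrite {1}(Rv r r0) /Vf; ring.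
by split; [exact: Su | exact: Sv].
Qed.
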